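(* For every oriented forest $F$, $\mathrm{mad}_{\vec{\chi}}(F)=|V(F)|$.
   Context: An oriented forest is an orientation of an undirected forest. $\vec{\chi}(D)$ is the dichromatic number (least $k$ such that $V(D)$ partitions into $k$ sets inducing acyclic subdigraphs). A subdivision of $F$ is obtained by replacing each arc $(x,y)$ by a directed $(x,y)$-path, internally disjoint with new internal vertices. $\mathrm{mad}_{\vec{\chi}}(F)$ is the least integer $c$ such that every digraph $D$ with $\vec{\chi}(D)\ge c$ contains a subdivision of $F$ as a subdigraph. *)

(* Defs.v *)
From mathcomp Require Import all_boot.
Set Implicit Arguments. Unset Strict Implicit. Unset Printing Implicit Defensive.

(* A (finite, loopless) digraph is an irreflexive relation D on a finType T
   (digons x->y, y->x are allowed). *)
Definition loopless (T : finType) (D : rel T) : Prop := irreflexive D.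

Definition acyclic_in (T : finType) (D : rel T) (S : {set T}) : Prop :=
  ~ (exists s : seq T, s != [::] /\ all (fun x => x \in S) s /\ cycle D s).

Definition dicolorable (T : finType) (D : rel T) (k : nat) : Prop :=
  exists f : T -> 'I_k, forall i : 'I_k, acyclic_in D [set x | f x == i].

Definition dichromatic (T : finType) (D : rel T) (k : nat) : Prop :=
  dicolorable D k /\ forall j, dicolorable D j -> k <= j.

Definition dichromatic_ge (T : finType) (D : rel T) (c : nat) : Prop :=
  forall k, dichromatic D k -> c <= k.

(* Oriented forest: orientation of an undirected forest: no loops, no digons,
   and the underlying undirected graph has no cycle (of length >= 3). *)
Definition symc (V : finType) (F : rel V) : rel V := fun u v => F u v || F v u.

Definition oriented_forest (V : finType) (F : rel V) : Prop :=
  irreflexive F /\ (forall u v, F u v -> ~~ F v u) /\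
  ~ (exists s : seq V, 2 < size s /\ uniq s /\ cycle (symc F) s).

(* D contains a subdivision of F as a subdigraph: branch vertices phi v
   (injective), and for every arc (u,v) of F a directed path from phi u to
   phi v whose internal vertices P u v are new (not branch vertices), distinct,
   and disjoint from the internal vertices of the paths of the other arcs. *)
Definition contains_subdivision (V : finType) (F : rel V)
    (T : finType) (D : rel T) : Prop :=
  exists (phi : V -> T) (P : V -> V -> seq T),
    injective phi /\
    (forall u v, F u v ->
       [/\ path D (phi u) (rcons (P u v) (phi v)), uniq (P u v) &
           forall x, x \in P u v -> forall w, x != phi w]) /\
    (forall u v u' v', F u v -> F u' v' -> (u, v) <> (u', v') ->
       forall x, x \in P u v -> x \notin P u' v').

Definition mad_property (V : finType) (F : rel V) (c : nat) : Prop :=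
  forall (T : finType) (D : rel T), loopless D -> dichromatic_ge D c ->
    contains_subdivision F D.

Definition is_mad_dichi (V : finType) (F : rel V) (c : nat) : Prop :=
  mad_property F c /\ forall c', mad_property F c' -> c <= c'.

(* Main.v *)
Require Import Defs.
From mathcomp Require Import all_boot.
From Stdlib Require Import Classical.
Set Implicit Arguments. Unset Strict Implicit. Unset Printing Implicit Defensive.

Definition colb (T : finType) (D : rel T) (S : {set T}) (k : nat) : Prop :=
  exists f : T -> nat, (forall x, x \in S -> f x < k) /\
    forall i, acyclic_in D [set x in S | f x == i].

Lemma acyclic_sub (T : finType) (D : rel T) (A B : {set T}) :
  acyclic_in D A -> B \subset A -> acyclic_in D B.
Proof.
move=> HA sub [s [ne [al cy]]]; apply: HA; exists s; split=>//; split=>//.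
apply/allP => x xs; exact: (subsetP sub) (allP al x xs).
Qed.

Lemma acyclic_flip (T : finType) (D : rel T) (A : {set T}) :
  acyclic_in D A -> acyclic_in (fun x y => D y x) A.
Proof.
move=> HA [s [ne [al cy]]]; apply: HA; exists (rev s).
split; first by rewrite -size_eq0 size_rev size_eq0.
split; first by rewrite all_rev.
by rewrite rev_cycle.
Qed.

Lemma colb_flip (T : finType) (D : rel T) S k :
  colb D S k -> colb (fun x y => D y x) S k.
Proof. by move=> [f [H1 H2]]; exists f; split=> // i; apply: acyclic_flip. Qed.

Lemma colb_set0 (T : finType) (D : rel T) k : colb D set0 k.
Proof.
exists (fun _ => 0); split=> [x|i]; first by rewrite inE.
move=> [s [ne [al _]]]; case: s ne al => [|y s] //= _.
by rewrite !inE.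
Qed.

Lemma minimal_set (T : finType) (D : rel T) k m (S : {set T}) :
  #|S| <= m -> ~ colb D S k -> exists S' : {set T}, S' \subset S /\
    ~ colb D S' k /\ forall x, x \in S' -> colb D (S' :\ x) k.
Proof.
elim: m S => [|m IH] S Hs Hn.
  exists S; split=> //; split=> // x xS.
  by move: Hs; rewrite (cardD1 x) xS.
case: (classic (forall x, x \in S -> colb D (S :\ x) k)) => H.
  by exists S.
have [x Hx] := not_all_ex_not _ _ H.
have [xS Hc] := imply_to_and _ _ Hx.
have [|S' [s1 [s2 s3]]] := IH (S :\ x) _ Hc.
  by move: Hs; rewrite (cardsD1 x S) xS.
exists S'; split=> //; apply: subset_trans s1 _; exact: subsetDl.
Qed.

Lemma degree (T : finType) (D : rel T) k (S : {set T}) :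
  irreflexive D -> ~ colb D S k -> (forall x, x \in S -> colb D (S :\ x) k) ->
  forall x, x \in S -> k <= #|[set y in S | D x y]|.
Proof.
move=> irr Hn Hmin x xS.
case: k Hn Hmin => [//|k] Hn Hmin.
rewrite leqNgt; apply/negP => Hlt.
have [f [fk fac]] := Hmin x xS.
set N := [set y in S | D x y].
pose h := fun y => (inord (f y) : 'I_k.+1).
have : #|h @: N| < #|'I_k.+1|.
  by rewrite card_ord; apply: leq_ltn_trans (leq_imset_card _ _) Hlt.
move=> Hc.
have : 0 < #|~: (h @: N)|.
  by move: Hc; rewrite -(cardsC (h @: N)); case: #|~: _| => //; rewrite addn0 ltnn.
rewrite card_gt0 => /set0Pn [i]; rewrite inE => iC.
apply: Hn.
exists (fun y => if y == x then val i else f y); split.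
  move=> y yS; case: eqP => [_|/eqP nyx]; first exact: ltn_ord.
  by apply: fk; rewrite !inE nyx.
move=> j [s [ne [al cy]]].
case: (boolP (x \in s)) => xs.
  have Dxy := next_cycle cy xs.
  set y := next s x in Dxy.
  have ys : y \in s by rewrite mem_next.
  have := allP al y ys; rewrite !inE => /andP [yS gy].
  have := allP al x xs; rewrite !inE eqxx => /andP [_ gx].
  have nyx : y != x by apply/eqP => E; rewrite E irr in Dxy.
  rewrite (negbTE nyx) in gy.
  move/negP: iC; apply; apply/imsetP; exists y; first by rewrite !inE yS.
  apply: val_inj => /=; rewrite inordK; last by apply: fk; rewrite !inE nyx.
  by rewrite (eqP gy) (eqP gx).
apply: (fac j); exists s; split=> //; split=> //.
apply/allP => y ys; have := allP al y ys; rewrite !inE.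
have nyx : y != x by apply: contraNneq xs => <-.
by rewrite nyx (negbTE nyx).
Qed.

Definition goodp (V : finType) (e : rel V) (U : {set V}) (s : seq V) : bool :=
  [&& uniq s, all (fun x => x \in U) s & (if s is x :: p then path e x p else true)].

Lemma leaf (V : finType) (F : rel V) (U : {set V}) :
  oriented_forest F -> U != set0 ->
  exists2 w, w \in U & forall a b, a \in U -> b \in U ->
     symc F w a -> symc F w b -> a = b.
Proof.
move=> [irr [asym nocyc]] /set0Pn [u uU].
set e := symc F.
have esym : forall x y, e x y = e y x by move=> x y; rewrite /e /symc orbC.
have eirr : forall x, e x x = false by move=> x; rewrite /e /symc irr.
pose P := fun m => [exists t : m.-tuple V, goodp e U t].
have P1 : P 1 by apply/existsP; exists [tuple u]; rewrite /goodp /= uU.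
have Pb : forall m, P m -> m <= #|U|.
  move=> m /existsP [t /and3P [ut alt _]].
  rewrite -(size_tuple t) cardE; apply: uniq_leq_size => // x xt.
  by rewrite mem_enum; exact: (allP alt).
have [m Pm Mm] := ex_maxnP (ex_intro _ 1 P1) Pb.
move/existsP: Pm => [t gt].
have st := size_tuple t.
have m1 := Mm 1 P1.
case Et : (tval t) gt st => [|x p]; first by move=> _ /= E; rewrite -E in m1.
move=> gt st.
have xU : x \in U by case/and3P: gt => _ /= /andP [].
exists x => // a b aU bU xa xb.
have inp : forall c, c \in U -> e x c -> c \in p.
  move=> c cU xc.
  have cx : c != x by apply/eqP => E; rewrite E eirr in xc.
  apply/negPn/negP => cp.
  have : P (size (c :: x :: p)).
    apply/existsP; exists (in_tuple (c :: x :: p)).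
    case/and3P: gt => ut alt pt.
    rewrite /goodp /= cU. move: alt; rewrite /= => ->. rewrite esym xc pt inE negb_or cx cp /=. by move: ut => /= ->.
  move/Mm; rewrite /=; move: st; rewrite /= => <-; by rewrite ltnn.
have ap := inp a aU xa; have bp := inp b bU xb.
apply/eqP; apply/negPn/negP => nab.
have [c [cp xc c1]] : exists c, [/\ c \in p, e x c & 0 < index c p].
  case: (posnP (index a p)) => ia; last by exists a.
  case: (posnP (index b p)) => ib; last by exists b.
  exfalso; move/negP: nab; apply.
  by rewrite -(nth_index x ap) -(nth_index x bp) ia ib.
set j := index c p.
have jp : j < size p by rewrite index_mem.
have Ep : p = rcons (take j p) c ++ drop j.+1 p.
  by rewrite -cats1 -catA /= -(nth_index x cp) -drop_nth // cat_take_drop.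
apply: nocyc; exists (x :: rcons (take j p) c); split.
  by rewrite /= size_rcons size_take jp.
case/and3P: gt => ut _ pt; split.
  by move: ut; rewrite [p in x :: p]Ep -cat_cons cat_uniq => /andP [].
rewrite /cycle rcons_path last_rcons -/e esym xc andbT.
by move: pt; rewrite [p in path _ _ p]Ep cat_path => /andP [].
Qed.

Lemma fresh (T : finType) (R : rel T) (S Im : {set T}) n z :
  irreflexive R -> (forall x, x \in S -> n <= #|[set y in S | R x y]|) ->
  #|Im| <= n -> z \in Im -> z \in S ->
  exists y, [/\ y \in S, y \notin Im & R z y].
Proof.
move=> irr deg cI zI zS.
set N := [set y in S | R z y].
case: (boolP (N \subset Im)) => sub; last first.
  case/subsetPn: sub => y; rewrite inE => /andP [yS Rzy] yI.
  by exists y.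
exfalso.
have sub' : N \subset Im :\ z.
  apply/subsetP => y yN; rewrite !inE (subsetP sub y yN) andbT.
  apply/eqP => E; move: yN; rewrite E inE irr andbF //.
have := subset_leq_card sub'.
have := deg z zS; rewrite -/N => h1 h2.
have h3 := leq_trans h1 h2.
move: cI; rewrite (cardsD1 z Im) zI add1n => cI.
by move: (leq_trans cI h3); rewrite ltnn.
Qed.

Lemma fresh0 (T : finType) (S Im : {set T}) :
  #|Im| < #|S| -> exists y, y \in S /\ y \notin Im.
Proof.
move=> c; case: (boolP (S \subset Im)) => sub.
  by move: (leq_ltn_trans (subset_leq_card sub) c); rewrite ltnn.
by case/subsetPn: sub => y yS yI; exists y.
Qed.

Lemma embed (V T : finType) (F : rel V) (D : rel T) (S : {set T}) t0 :
  oriented_forest F -> irreflexive D -> t0 \in S -> #|V| <= #|S| ->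
  (forall x, x \in S -> #|V|.-1 <= #|[set y in S | D x y]|) ->
  (forall x, x \in S -> #|V|.-1 <= #|[set y in S | D y x]|) ->
  forall m (U : {set V}), #|U| <= m -> exists phi : V -> T,
    [/\ {in U &, injective phi}, {in U, forall u, phi u \in S} &
        forall u v, u \in U -> v \in U -> F u v -> D (phi u) (phi v)].
Proof.
move=> Ffor irr t0S cS dout din.
have [Firr [Fasym _]] := Ffor.
elim=> [|m IH] U cU.
  exists (fun _ => t0); split.
  - by move=> u v; move: cU; rewrite (cardD1 u) => /[swap] ->.
  - by move=> u; move: cU; rewrite (cardD1 u) => /[swap] ->.
  - by move=> u v; move: cU; rewrite (cardD1 u) => /[swap] ->.
case: (eqVneq U set0) => [->|Un0].
  exists (fun _ => t0); split; by move=> ?; rewrite inE.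
have [w wU wleaf] := leaf Ffor Un0.
have [|phi [pinj pS pD]] := IH (U :\ w).
  by move: cU; rewrite (cardsD1 w U) wU.
set Im := phi @: (U :\ w).
have cIm : #|Im| <= #|V|.-1.
  apply: leq_trans (leq_imset_card _ _) _.
  have := max_card U; rewrite (cardsD1 w U) wU add1n.
  by case: #|V|.
have [y [yS yI Q]] : exists y, [/\ y \in S, y \notin Im &
    forall v, v \in U -> v != w -> (F w v -> D y (phi v)) /\ (F v w -> D (phi v) y)].
  case: (pickP (fun a => (a \in U) && symc F w a)) => [a /andP [aU wa]|none].
    have aw : a != w by apply/eqP => E; move: wa; rewrite E /symc Firr.
    have aUw : a \in U :\ w by rewrite !inE aw.
    have aI : phi a \in Im by apply: imset_f.
    have va : forall v, v \in U -> symc F w v -> v = a.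
      by move=> v vU wv; apply: wleaf.
    case/orP: (wa) => [Fwa|Faw].
      have [y [yS yI Dy]] := fresh (R := fun x y => D y x) irr din cIm aI (pS a aUw).
      exists y; split=> // v vU vw; split => Fv.
        by rewrite (va v vU) ?Dy // /symc Fv.
      have Ev : v = a by apply: va; rewrite // /symc Fv orbT.
      by exfalso; move: (Fasym _ _ Fwa); rewrite -Ev Fv.
    have [y [yS yI Dy]] := fresh irr dout cIm aI (pS a aUw).
    exists y; split=> // v vU vw; split => Fv.
      have Ev : v = a by apply: va; rewrite // /symc Fv.
      by exfalso; move: (Fasym _ _ Faw); rewrite -Ev Fv.
    by rewrite (va v vU) ?Dy // /symc Fv orbT.
  have [|y [yS yI]] := fresh0 (S := S) (Im := Im).
    apply: leq_ltn_trans cIm _; move: cS; case: #|V| => [_|n] //=; by apply/card_gt0P; exists t0.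
  exists y; split=> // v vU vw; split=> Fv.
    by move: (none v); rewrite vU /symc Fv.
  by move: (none v); rewrite vU /symc Fv orbT.
exists (fun v => if v == w then y else phi v); split.
- move=> u v uU vU /=.
  case: (eqVneq u w) => [->|uw]; case: (eqVneq v w) => [->|vw] //.
  + move=> E; move: yI; rewrite E; move/negP; case; apply: imset_f; by rewrite !inE vw.
  + move=> E; move: yI; rewrite -E; move/negP; case; apply: imset_f; by rewrite !inE uw.
  + by apply: pinj; rewrite !inE ?uw ?vw.
- move=> u uU /=; case: (eqVneq u w) => // uw; by apply: pS; rewrite !inE uw.
- move=> u v uU vU Fuv /=.
  case: (eqVneq u w) => [E|uw]; case: (eqVneq v w) => [E'|vw].
  + by move: Fuv; rewrite E E' Firr.
  + by rewrite E in Fuv; apply: (proj1 (Q v vU vw)).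
  + by rewrite E' in Fuv; apply: (proj2 (Q u uU uw)).
  + by apply: pD; rewrite // !inE ?uw ?vw.
Qed.

Lemma exists_dichromatic (T : finType) (D : rel T) m k :
  k <= m -> dicolorable D k -> exists k', k' <= k /\ dichromatic D k'.
Proof.
elim: m k => [|m IH] k km Dk.
  exists k; split=> //; split=> // j _; by move: km; rewrite leqn0 => /eqP ->.
case: (classic (forall j, dicolorable D j -> k <= j)) => H.
  by exists k; split.
have [j Hj] := not_all_ex_not _ _ H.
have [Dj jk] := imply_to_and _ _ Hj.
have jk' : j < k by rewrite ltnNge; apply/negP.
have [|k' [k'j dk']] := IH j _ Dj; first by rewrite -ltnS (leq_trans jk').
exists k'; split=> //; exact: leq_trans k'j (ltnW jk').
Qed.

Lemma lower (V : finType) (F : rel V) c : mad_property F c -> #|V| <= c.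
Proof.
move=> H.
have loop : loopless (fun x y : 'I_c => x != y) by move=> x; rewrite /= eqxx.
have dge : dichromatic_ge (fun x y : 'I_c => x != y) c.
  move=> k [[f Hf] _]; rewrite leqNgt; apply/negP => kc.
  have : ~ injective f.
    by move=> /leq_card; rewrite !card_ord leqNgt kc.
  move=> ninj; have [x Hx] := not_all_ex_not _ _ ninj.
  have [y Hy] := not_all_ex_not _ _ Hx.
  have [fxy nxy] := imply_to_and _ _ Hy.
  apply: (Hf (f x)); exists [:: x; y]; split=> //; split.
    by rewrite /= !inE fxy eqxx.
  by rewrite /cycle /= andbT; apply/andP; split; apply/eqP => // E; apply: nxy.
have [phi [P [inj _]]] := H _ _ loop dge.
by have := leq_card _ inj; rewrite card_ord.
Qed.

Lemma upper (V : finType) (F : rel V) :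
  oriented_forest F -> mad_property F #|V|.
Proof.
move=> Ffor T D irr dge.
have [Firr _] := Ffor.
suff [phi [pinj pD]] : exists phi : V -> T, injective phi /\
    forall u v, F u v -> D (phi u) (phi v).
  exists phi, (fun _ _ => [::]); split=> //; split=> //.
  by move=> u v Fuv; split=> //=; rewrite pD.
case En : #|V| => [|n] in dge *.
  have HV : V -> False by move=> v; move: En; rewrite (cardD1 v) inE.
  exists (fun v => False_rect _ (HV v)); split; by move=> u; case: (HV u).
have ncol : ~ colb D setT n.
  move=> [f [fk fac]].
  have Dn : dicolorable D n.
    exists (fun x => Ordinal (fk x (in_setT x))) => i.
    apply: acyclic_sub (fac i) _; apply/subsetP => x; rewrite !inE.
    by move=> /eqP <-; rewrite /= eqxx.
  have [k' [k'n dk']] := exists_dichromatic (leqnn n) Dn.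
  by move: (leq_trans (dge k' dk') k'n); rewrite ltnn.
have [S [_ [nS minS]]] := minimal_set (leqnn #|[set: T]|) ncol.
have dout := degree irr nS minS.
have din : forall x, x \in S -> n <= #|[set y in S | D y x]|.
  apply: (degree (D := fun x y => D y x)) => //.
    by move=> /colb_flip.
  by move=> x xS; apply: colb_flip; apply: minS.
have [t0 t0S] : exists t0, t0 \in S.
  apply/set0Pn; apply/negP => /eqP E; apply: nS; rewrite E; apply: colb_set0.
have cS : #|V| <= #|S|.
  rewrite En (cardsD1 t0 S) t0S add1n ltnS.
  apply: leq_trans (dout t0 t0S) _; apply: subset_leq_card.
  apply/subsetP => y; rewrite !inE => /andP [-> Dy]; rewrite andbT.
  by apply/eqP => E; rewrite E irr in Dy.
have dout' : forall x, x \in S -> #|V|.-1 <= #|[set y in S | D x y]| by rewrite En.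
have din' : forall x, x \in S -> #|V|.-1 <= #|[set y in S | D y x]| by rewrite En.
have [phi [pinj _ pD]] := @embed V T F D S t0 Ffor irr t0S cS
   dout' din' #|V| setT (max_card _).
exists phi; split; first by move=> u v; apply: pinj; rewrite inE.
by move=> u v; apply: pD; rewrite inE.
Qed.

Theorem corollary35 (V : finType) (F : rel V) :
  oriented_forest F -> is_mad_dichi F #|V|.
Proof.
move=> Ffor; split; first exact: upper.
by move=> c; apply: lower.
Qed.
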